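(* Let $\Gamma((r^S)_{S\subseteq I})$ be a quitting game satisfying $r^i_i=0$ for all $i\in I$. If there is a normal player $i\in I_*$ such that $r^i\in\mathbb R^N_{\ge0}$, then for every $\varepsilon>0$ the game has a stationary $\varepsilon$-equilibrium.
   Context: A quitting game $\Gamma((r^S)_{S\subseteq I})$: finite player set $I=[N]$, vectors $r^S\in[-1,1]^N$ for all $S\subseteq I$; at each stage $t\in\mathbb N$ each player chooses to continue or quit; with $t^*$ the first stage at which some player quits and $S^*$ the set of players quitting then ($S^*=\emptyset$ if nobody ever quits), the payoff is $r^{S^*}$. Write $r^i:=r^{\{i\}}$. A (behavior) strategy of player $i$ is a sequence $x_i=(x_i^t)_{t\in\mathbb N}\subset[0,1]$, $x_i^t$ being the probability of quitting at stage $t$ if nobody quit before; it is stationary if $x_i^t$ does not depend on $t$. $\gamma(x):=\mathbb E_x[r^{S^*}]$. A profile $x$ is an $\varepsilon$-equilibrium if $\gamma_i(x)\ge\gamma_i(x_i',x_{-i})-\varepsilon$ for all $i$ and all strategies $x_i'$. Normal players: $I_0:=I$, $I_{l+1}:=\{i\in I_l:\ \exists j\in I_l,\ j\neq i,\ r^j_i\le0\}$, and $I_*:=\bigcap_{l}I_l$. Players in $I_*$ are normal, the others abnormal. *)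

(* Defs.v *)
From mathcomp Require Import all_boot.
From Stdlib Require Import Reals ClassicalEpsilon.
Set Implicit Arguments. Unset Strict Implicit. Unset Printing Implicit Defensive.

Local Open Scope R_scope.

(* Players are 'I_N.  A quitting game is given by r : {set 'I_N} -> 'I_N -> R
   (r S = payoff vector when S is the set of players quitting first). *)
Definition game (N : nat) := {set 'I_N} -> 'I_N -> R.

Definition game_bounded N (r : game N) : Prop :=
  forall S i, -1 <= r S i <= 1.

(* Behaviour strategy profile: x i t = prob. player i quits at stage t
   (given nobody quit before). *)
Definition profile (N : nat) := 'I_N -> nat -> R.

Definition is_strategy (y : nat -> R) : Prop := forall t, 0 <= y t <= 1.
Definition is_profile N (x : profile N) : Prop := forall i, is_strategy (x i).

Definition is_stationary N (x : profile N) : Prop :=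
  forall i t, x i t = x i 0%nat.

Definition noquit N (x : profile N) (T : nat) : R :=
  \big[Rmult/1]_(s < T) \big[Rmult/1]_(j : 'I_N) (1 - x j s).

(* probability that t is the first quitting stage and S the quitting set *)
Definition pstop N (x : profile N) (t : nat) (S : {set 'I_N}) : R :=
  noquit x t * (\big[Rmult/1]_(j in S) x j t)
             * (\big[Rmult/1]_(j in ~: S) (1 - x j t)).

(* expected payoff of player i, truncated at horizon T:
   quitting before T counted with its payoff; otherwise payoff r^emptyset *)
Definition payoffT N (r : game N) (x : profile N) (T : nat) (i : 'I_N) : R :=
  \big[Rplus/0]_(t < T) \big[Rplus/0]_(S : {set 'I_N} | S != set0)
      (pstop x t S * r S i)
  + noquit x T * r set0 i.

(* gamma_i(x) = E_x[r^{S*}_i], the limit of the truncated expectations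
   (the limit always exists; it is selected by classical choice). *)
Definition gamma N (r : game N) (x : profile N) (i : 'I_N) : R :=
  epsilon (inhabits 0) (fun l => Un_cv (fun T => payoffT r x T i) l).

Definition deviate N (x : profile N) (i : 'I_N) (y : nat -> R) : profile N :=
  fun j => if j == i then y else x j.

Definition eps_equilibrium N (r : game N) (x : profile N) (eps : R) : Prop :=
  forall (i : 'I_N) (y : nat -> R), is_strategy y ->
    gamma r x i >= gamma r (deviate x i y) i - eps.

(* Normal players: I_0 = I,
   I_{l+1} = {i in I_l | exists j in I_l, j <> i, r^{j}_i <= 0},
   I_* = intersection of all I_l. *)
Fixpoint inIl N (r : game N) (l : nat) (i : 'I_N) : Prop :=
  match l with
  | O => True
  | S l' => inIl r l' i /\ exists j : 'I_N, j <> i /\ inIl r l' j /\ r [set j] i <= 0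
  end.

Definition normal N (r : game N) (i : 'I_N) : Prop := forall l, inIl r l i.

(* Main.v *)
Require Import Defs.
From HB Require Import structures.
From mathcomp Require Import all_boot.
From Stdlib Require Import Reals Lra Lia ClassicalEpsilon.
From mathcomp Require Import zify.
Set Warnings "-redundant-canonical-projection -notation-overridden".
Set Implicit Arguments. Unset Strict Implicit. Unset Printing Implicit Defensive.
Local Open Scope R_scope.

Lemma RpA : associative Rplus. Proof. move=> x y z; lra. Qed.
Lemma RmA : associative Rmult. Proof. move=> x y z; lra. Qed.
Lemma R0l : left_id 0 Rplus. Proof. move=> x; lra. Qed.
Lemma R1l : left_id 1 Rmult. Proof. move=> x; lra. Qed.
HB.instance Definition _ := Monoid.isComLaw.Build R 0 Rplus RpA Rplus_comm R0l.
HB.instance Definition _ := Monoid.isComLaw.Build R 1 Rmult RmA Rmult_comm R1l.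
Lemma Rm0l : left_zero 0 Rmult. Proof. move=> x; lra. Qed.
Lemma Rm0r : right_zero 0 Rmult. Proof. move=> x; lra. Qed.
HB.instance Definition _ := Monoid.isMulLaw.Build R 0 Rmult Rm0l Rm0r.
Lemma Rdl : left_distributive Rmult Rplus. Proof. move=> x y z; lra. Qed.
Lemma Rdr : right_distributive Rmult Rplus. Proof. move=> x y z; lra. Qed.
HB.instance Definition _ := Monoid.isAddLaw.Build R Rmult Rplus Rdl Rdr.

Definition W {N : nat} (a b : 'I_N -> R) (S : {set 'I_N}) :=
  \big[Rmult/1]_(j in S) a j * \big[Rmult/1]_(j in ~: S) b j.

Lemma W_sum {N : nat} (a b : 'I_N -> R) : \big[Rplus/0]_(S : {set 'I_N}) W a b S = \big[Rmult/1]_j (a j + b j).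
Proof.
pose F := fun (j : 'I_N) (c : bool) => if c then a j else b j.
have -> : \big[Rmult/1]_j (a j + b j) = \big[Rmult/1]_j \big[Rplus/0]_c F j c.
  by apply: eq_bigr => j _; rewrite big_bool.
rewrite bigA_distr_bigA /=.
rewrite (reindex (fun f : {ffun 'I_N -> bool} => [set j | f j])) /=; last first.
  exists (fun S : {set 'I_N} => [ffun j => j \in S]) => f _.
    by apply/ffunP => j; rewrite ffunE inE.
  by apply/setP => j; rewrite inE ffunE.
apply: eq_bigr => f _; rewrite /W [RHS](bigID (fun j => f j)) /=.
congr (_ * _); apply: eq_big => j; rewrite ?inE //.
- by move=> ->.
- by move/negbTE => ->.
Qed.

Lemma W_marg {N : nat} (a b : 'I_N -> R) (M : {set 'I_N}) :
  \big[Rplus/0]_(S : {set 'I_N}) (if M \subset S then W a b S else 0) =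
  \big[Rmult/1]_(j in M) a j * \big[Rmult/1]_(j in ~: M) (a j + b j).
Proof.
have := W_sum a (fun j => if j \in M then 0 else b j).
have -> : \big[Rplus/0]_(S : {set 'I_N}) W a (fun j => if j \in M then 0 else b j) S =
          \big[Rplus/0]_(S : {set 'I_N}) (if M \subset S then W a b S else 0).
  apply: eq_bigr => S _; case: (boolP (M \subset S)) => h.
    rewrite /W; congr (_ * _); apply: eq_bigr => j /setCP /negP jS.
    have jM : j \notin M by apply: contra jS; apply: (subsetP h).
    by rewrite (negbTE jM).
  case/subsetPn: h => j jM jS.
  rewrite /W [X in _ * X](bigD1 j) /=; last by rewrite !inE.
  rewrite jM; lra.
move=> ->; rewrite (bigID (fun j => j \in M)) /=.
congr (_ * _); apply: eq_big => j //.
- by move=> ->; lra.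
- by rewrite inE.
- by move/negbTE => ->.
Qed.

Definition Wt {N} (x : profile N) t S := W (fun j => x j t) (fun j => 1 - x j t) S.
Definition Qt {N} (x : profile N) t := 1 - \big[Rmult/1]_(j : 'I_N) (1 - x j t).
Definition Et {N} (r : game N) (x : profile N) t k :=
  \big[Rplus/0]_(S : {set 'I_N} | S != set0) (Wt x t S * r S k).

Lemma sum_le {I : finType} (P : pred I) (F G : I -> R) :
  (forall i, P i -> F i <= G i) ->
  \big[Rplus/0]_(i | P i) F i <= \big[Rplus/0]_(i | P i) G i.
Proof. move=> H; apply: (big_ind2 Rle) => //; [lra | move=> *; lra]. Qed.

Lemma sum_ge0 {I : finType} (P : pred I) (F : I -> R) :
  (forall i, P i -> 0 <= F i) -> 0 <= \big[Rplus/0]_(i | P i) F i.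
Proof. move=> H; apply: (big_ind (fun v => 0 <= v)) => //; [lra | move=> *; lra]. Qed.

Lemma prod_01 {I : finType} (P : pred I) (F : I -> R) :
  (forall i, P i -> 0 <= F i <= 1) -> 0 <= \big[Rmult/1]_(i | P i) F i <= 1.
Proof.
move=> H; apply: (big_ind (fun v => 0 <= v <= 1)) => //; first lra.
move=> u v Hu Hv; split; [nra|nra].
Qed.

Lemma sum_sub {I : finType} (P : pred I) (F : I -> R) :
  (forall i, 0 <= F i) -> \big[Rplus/0]_(i | P i) F i <= \big[Rplus/0]_i F i.
Proof.
move=> H; rewrite [X in _ <= X](bigID P) /=.
have := @sum_ge0 _ (fun i => ~~ P i) F (fun i _ => H i); lra.
Qed.

Lemma sum_one {N} (j : 'I_N) (eta : R) (P : pred 'I_N) (f : 'I_N -> R) :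
  0 <= eta -> (forall m, P m -> f m <= (if m == j then eta else 0)) ->
  \big[Rplus/0]_(m | P m) f m <= eta.
Proof.
move=> He H; apply: Rle_trans (sum_le H) _.
apply: Rle_trans (sum_sub _ _) _; first by move=> m; case: ifP => _; lra.
rewrite (bigD1 j) //= eqxx big1; first lra.
by move=> m /negbTE ->.
Qed.

Lemma Wt_bounds {N} (x : profile N) t S : is_profile x -> 0 <= Wt x t S <= 1.
Proof.
move=> Hx; rewrite /Wt /W.
set A := \big[Rmult/1]_(j in S) _; set B := \big[Rmult/1]_(j in ~: S) _.
have h1 : 0 <= A <= 1 by apply: prod_01 => j _; apply: Hx.
have h2 : 0 <= B <= 1 by apply: prod_01 => j _; have := Hx j t; lra.
split; nra.
Qed.

Lemma noquit_bounds {N} (x : profile N) T : is_profile x -> 0 <= noquit x T <= 1.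
Proof.
move=> Hx; apply: prod_01 => s _; apply: prod_01 => j _; have := Hx j s; lra.
Qed.

Lemma pstopE {N} (x : profile N) t S : pstop x t S = noquit x t * Wt x t S.
Proof. by rewrite /pstop /Wt /W Rmult_assoc. Qed.

Lemma noquit0 {N} (x : profile N) : noquit x 0 = 1.
Proof. by rewrite /noquit big_ord0. Qed.

Lemma noquitS {N} (x : profile N) t : noquit x t.+1 = noquit x t * (1 - Qt x t).
Proof.
rewrite /noquit big_ord_recr /= /Qt.
set A := \big[Rmult/1]_(i < t) _; set B := \big[Rmult/1]_(j < N) (1 - x j t); ring.
Qed.

Lemma Qt_bounds {N} (x : profile N) t : is_profile x -> 0 <= Qt x t <= 1.
Proof.
move=> Hx; rewrite /Qt; set B := \big[Rmult/1]_j _.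
have : 0 <= B <= 1 by apply: prod_01 => j _; have := Hx j t; lra.
lra.
Qed.

Lemma Qt_ge {N} (x : profile N) t m : is_profile x -> x m t <= Qt x t.
Proof.
move=> Hx; rewrite /Qt (bigD1 m) //=; set B := \big[Rmult/1]_(j | j != m) _.
have : 0 <= B <= 1 by apply: prod_01 => j _; have := Hx j t; lra.
have := Hx m t; nra.
Qed.

Lemma Qt_sum {N} (x : profile N) t :
  \big[Rplus/0]_(S : {set 'I_N} | S != set0) Wt x t S = Qt x t.
Proof.
have := W_sum (fun j => x j t) (fun j => 1 - x j t).
have -> : \big[Rmult/1]_j (x j t + (1 - x j t)) = 1.
  by rewrite big1 // => j _; ring.
rewrite (bigD1 set0) //=.
rewrite /Qt /Wt /W big_set0.
have -> : \big[Rmult/1]_(j in ~: set0) (1 - x j t) = \big[Rmult/1]_(j < N) (1 - x j t).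
  by apply: eq_bigl => j; rewrite !inE.
match goal with |- _ + ?b = 1 -> ?c = _ => have e : c = b by reflexivity end.
rewrite e; lra.
Qed.

Lemma marg1 {N} (x : profile N) t (m : 'I_N) :
  \big[Rplus/0]_(S : {set 'I_N}) (if m \in S then Wt x t S else 0) = x m t.
Proof.
transitivity (\big[Rplus/0]_(S : {set 'I_N}) (if [set m] \subset S then Wt x t S else 0)).
  by apply: eq_bigr => S _; rewrite sub1set.
rewrite /Wt W_marg big_set1 big1; first ring.
by move=> j _; ring.
Qed.

Lemma marg2 {N} (x : profile N) t (a b : 'I_N) : a != b ->
  \big[Rplus/0]_(S : {set 'I_N}) (if (a \in S) && (b \in S) then Wt x t S else 0)
  = x a t * x b t.
Proof.
move=> ab.
transitivity (\big[Rplus/0]_(S : {set 'I_N}) (if [set a; b] \subset S then Wt x t S else 0)).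
  by apply: eq_bigr => S _; rewrite subUset !sub1set.
rewrite /Wt W_marg big_setU1 ?inE // big_set1 big1; first by cbn; ring.
by move=> j _; ring.
Qed.

Lemma Et_bounds {N} (r : game N) (x : profile N) t k :
  game_bounded r -> is_profile x -> - Qt x t <= Et r x t k <= Qt x t.
Proof.
move=> rb Hx; rewrite -Qt_sum /Et; split.
- have -> : - (\big[Rplus/0]_(S : {set 'I_N} | S != set0) Wt x t S) =
            \big[Rplus/0]_(S : {set 'I_N} | S != set0) (- 1 * Wt x t S).
    rewrite -big_distrr /=; ring.
  apply: sum_le => S _; have := Wt_bounds t S Hx; have := rb S k; nra.
- apply: sum_le => S _; have := Wt_bounds t S Hx; have := rb S k; nra.
Qed.

Lemma payoffT0 {N} (r : game N) (x : profile N) k : payoffT r x 0 k = r set0 k.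
Proof. rewrite /payoffT big_ord0 noquit0; ring. Qed.

Lemma payoffT_step {N} (r : game N) (x : profile N) T k :
  payoffT r x T.+1 k =
  payoffT r x T k + noquit x T * (Et r x T k - Qt x T * r set0 k).
Proof.
rewrite /payoffT big_ord_recr /=.
have -> : \big[Rplus/0]_(S : {set 'I_N} | S != set0) (pstop x T S * r S k)
          = noquit x T * Et r x T k.
  rewrite /Et big_distrr /=; apply: eq_bigr => S _; rewrite pstopE; ring.
rewrite noquitS.
set A := \big[Rplus/0]_(i < T) _.
set p := noquit x T; set E := Et r x T k; set Q := Qt x T; ring.
Qed.

Lemma step_abs {N} (r : game N) (x : profile N) T k :
  game_bounded r -> is_profile x ->
  Rabs (payoffT r x T.+1 k - payoffT r x T k) <= 2 * (noquit x T - noquit x T.+1).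
Proof.
move=> rb Hx; rewrite payoffT_step noquitS.
have hE := Et_bounds T k rb Hx; have hQ := Qt_bounds T Hx.
have hp := noquit_bounds T Hx; have hr := rb set0 k.
set p := noquit x T in hp *; set E := Et r x T k in hE *; set Q := Qt x T in hE hQ *.
set u := payoffT r x T k.
have -> : u + p * (E - Q * r set0 k) - u = p * (E - Q * r set0 k) by ring.
have h1 : 0 <= p * (Q - E) by apply: Rmult_le_pos; lra.
have h2 : 0 <= p * (E + Q) by apply: Rmult_le_pos; lra.
have h0 : 0 <= p * Q by apply: Rmult_le_pos; lra.
have h3 : 0 <= (p * Q) * (1 - r set0 k) by apply: Rmult_le_pos; lra.
have h4 : 0 <= (p * Q) * (1 + r set0 k) by apply: Rmult_le_pos; lra.
apply: Rabs_le; split; lra.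
Qed.

Lemma diff_abs {N} (r : game N) (x : profile N) k n d :
  game_bounded r -> is_profile x ->
  Rabs (payoffT r x (n + d)%nat k - payoffT r x n k) <= 2 * (noquit x n - noquit x (n + d)%nat).
Proof.
move=> rb Hx; elim: d => [|d IH].
  rewrite addn0; have -> : payoffT r x n k - payoffT r x n k = 0 by ring.
  rewrite Rabs_R0; lra.
rewrite addnS.
have := step_abs (n + d)%nat k rb Hx; move: IH.
set a := payoffT r x (n + d).+1 k; set b := payoffT r x (n + d)%nat k.
set c := payoffT r x n k.
move=> IH h; have -> : a - c = (a - b) + (b - c) by ring.
apply: Rle_trans (Rabs_triang (a - b) (b - c)) _.
lra.
Qed.

Lemma noquit_decr {N} (x : profile N) n : is_profile x -> noquit x n.+1 <= noquit x n.
Proof.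
move=> Hx; rewrite noquitS; have := noquit_bounds n Hx; have := Qt_bounds n Hx; nra.
Qed.

Lemma payoff_cv {N} (r : game N) (x : profile N) k :
  game_bounded r -> is_profile x ->
  {l | Un_cv (fun T => payoffT r x T k) l}.
Proof.
move=> rb Hx; apply: R_complete.
have Cp : Cauchy_crit (noquit x).
  apply: CV_Cauchy; apply: decreasing_cv.
    by move=> n; apply: noquit_decr.
  exists 0 => y [i ->]; rewrite /opp_seq; have := noquit_bounds i Hx; lra.
move=> eps He; have [M HM] := Cp (eps / 2) ltac:(lra).
exists M => n m Hn Hm; rewrite /Rdist.
have hp := HM n m Hn Hm; rewrite /Rdist in hp.
have hp' := Rle_abs (noquit x n - noquit x m).
have hp'' := Rle_abs (- (noquit x n - noquit x m)). rewrite Rabs_Ropp in hp''.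
case: (Nat.le_ge_cases n m) => h.
- have -> : m = (n + (m - n))%nat by lia.
  rewrite Rabs_minus_sym.
  have := diff_abs k n (m - n) rb Hx.
  have -> : (n + (m - n))%nat = m by lia.
  lra.
- have -> : n = (m + (n - m))%nat by lia.
  have := diff_abs k m (n - m) rb Hx.
  have -> : (m + (n - m))%nat = n by lia.
  lra.
Qed.

Lemma gamma_spec {N} (r : game N) (x : profile N) k :
  game_bounded r -> is_profile x ->
  Un_cv (fun T => payoffT r x T k) (gamma r x k).
Proof.
move=> rb Hx; rewrite /gamma; apply: epsilon_spec.
by have [l Hl] := payoff_cv k rb Hx; exists l.
Qed.

Lemma payoff_upper {N} (r : game N) (x : profile N) k A (c : nat -> R) :
  is_profile x -> 0 <= A -> (forall t, Et r x t k <= A * Qt x t + c t) ->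
  forall T, payoffT r x T k <= A * (1 - noquit x T)
      + \big[Rplus/0]_(t < T) (noquit x t * c t) + noquit x T * r set0 k.
Proof.
move=> Hx HA Hc; elim=> [|T IH].
  rewrite payoffT0 big_ord0 noquit0; lra.
rewrite payoffT_step big_ord_recr /= noquitS.
have hp := noquit_bounds T Hx; have hc := Hc T.
move: IH; set p := noquit x T in hp *; set E := Et r x T k in hc *.
set Q := Qt x T in hc *; set u := payoffT r x T k.
set s := \big[Rplus/0]_(i < T) _ => IH.
have : p * E <= p * (A * Q + c T) by apply: Rmult_le_compat_l; lra.
lra.
Qed.

Lemma payoff_lower {N} (r : game N) (x : profile N) k A (c : nat -> R) :
  is_profile x -> (forall t, A * Qt x t - c t <= Et r x t k) ->
  forall T, A * (1 - noquit x T)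
      - \big[Rplus/0]_(t < T) (noquit x t * c t) + noquit x T * r set0 k
      <= payoffT r x T k.
Proof.
move=> Hx Hc; elim=> [|T IH].
  rewrite payoffT0 big_ord0 noquit0; lra.
rewrite payoffT_step big_ord_recr /= noquitS.
have hp := noquit_bounds T Hx; have hc := Hc T.
move: IH; set p := noquit x T in hp *; set E := Et r x T k in hc *.
set Q := Qt x T in hc *; set u := payoffT r x T k.
set s := \big[Rplus/0]_(i < T) _ => IH.
have : p * (A * Q - c T) <= p * E by apply: Rmult_le_compat_l; lra.
lra.
Qed.

Lemma sum_pc {N} (x : profile N) (c : nat -> R) al be :
  is_profile x -> (forall t, c t <= al + be * Qt x t) ->
  forall T, \big[Rplus/0]_(t < T) (noquit x t * c t)
     <= al * \big[Rplus/0]_(t < T) noquit x t + be * (1 - noquit x T).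
Proof.
move=> Hx Hc; elim=> [|T IH].
  rewrite !big_ord0 noquit0; lra.
rewrite !big_ord_recr /= noquitS.
have hp := noquit_bounds T Hx; have hc := Hc T.
move: IH; set p := noquit x T in hp *.
set Q := Qt x T in hc *.
set s1 := \big[Rplus/0]_(i < T) (noquit x i * c i).
set s2 := \big[Rplus/0]_(i < T) noquit x i => IH.
have : p * c T <= p * (al + be * Q) by apply: Rmult_le_compat_l; lra.
lra.
Qed.

Lemma sum_p {N} (x : profile N) d :
  is_profile x -> (forall t, d <= Qt x t) ->
  forall T, d * \big[Rplus/0]_(t < T) noquit x t <= 1 - noquit x T.
Proof.
move=> Hx Hd; elim=> [|T IH].
  rewrite !big_ord0 noquit0; lra.
rewrite !big_ord_recr /= noquitS.
have hp := noquit_bounds T Hx; have hc := Hd T.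
move: IH; set p := noquit x T in hp *.
set Q := Qt x T in hc *.
set s2 := \big[Rplus/0]_(i < T) noquit x i => IH.
have : p * d <= p * Q by apply: Rmult_le_compat_l; lra.
lra.
Qed.

Lemma p_decay {N} (x : profile N) d :
  is_profile x -> d <= 1 -> (forall t, d <= Qt x t) ->
  forall T, noquit x T <= (1 - d) ^ T.
Proof.
move=> Hx d1 Hd; elim=> [|T IH].
  rewrite noquit0 /=; lra.
rewrite noquitS /=.
have hp := noquit_bounds T Hx; have hc := Hd T; have hq := Qt_bounds T Hx.
have : noquit x T * (1 - Qt x T) <= noquit x T * (1 - d)
  by apply: Rmult_le_compat_l; lra.
have : noquit x T * (1 - d) <= (1 - d) ^ T * (1 - d)
  by apply: Rmult_le_compat_r; lra.
lra.
Qed.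

Lemma lim_upper (u : nat -> R) l U C q :
  Un_cv u l -> 0 <= q < 1 -> 0 <= C -> (forall T, u T <= U + C * q ^ T) -> l <= U.
Proof.
move=> Hu Hq HC H.
destruct (Rle_lt_dec l U) as [h|h]; first exact h.
exfalso.
set e := (l - U) / 2.
have he : 0 < e by rewrite /e; lra.
have he2 : 2 * e = l - U by rewrite /e; field.
have [N1 HN1] := Hu e he.
have hq1 : Rabs q < 1 by rewrite Rabs_pos_eq; lra.
have [N2 HN2] := pow_lt_1_zero q hq1 (e / (C + 1)) ltac:(apply: Rdiv_lt_0_compat; lra).
set n := Nat.max N1 N2.
have h1 := HN1 n ltac:(lia); have h2 := HN2 n ltac:(lia).
rewrite /Rdist in h1.
have hp : 0 <= q ^ n by apply: pow_le; lra.
rewrite Rabs_pos_eq // in h2.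
have h3 : q ^ n * (C + 1) < e.
  have -> : e = e / (C + 1) * (C + 1) by field; lra.
  apply: Rmult_lt_compat_r; lra.
have := H n; have := Rle_abs (l - u n).
rewrite Rabs_minus_sym in h1.
nra.
Qed.

Lemma lim_lower (u : nat -> R) l L C q :
  Un_cv u l -> 0 <= q < 1 -> 0 <= C -> (forall T, L - C * q ^ T <= u T) -> L <= l.
Proof.
move=> Hu Hq HC H.
have : - l <= - L.
  apply: (lim_upper (u := fun T => - u T)) Hq HC _.
    by have := CV_opp u l Hu; rewrite /opp_seq.
  move=> T; have := H T; lra.
lra.
Qed.

Lemma Rle_addr (w s : R) : 0 <= s -> w <= w + s.
Proof. lra. Qed.

Lemma E_upper {N} (r : game N) (x : profile N) t k (a b : 'I_N) A :
  game_bounded r -> is_profile x -> a != b -> 0 <= A ->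
  r [set a] k <= A -> r [set b] k <= 0 ->
  Et r x t k <= A * Qt x t +
     (\big[Rplus/0]_(m | (m != a) && (m != b)) x m t + x a t * x b t).
Proof.
move=> rb Hx ab HA ra rb0.
pose G := fun S : {set 'I_N} =>
  \big[Rplus/0]_(m | (m != a) && (m != b)) (if m \in S then Wt x t S else 0)
  + (if (a \in S) && (b \in S) then Wt x t S else 0).
have key : forall S : {set 'I_N}, S != set0 ->
    Wt x t S * r S k <= A * Wt x t S + G S.
  move=> S S0; have hw := Wt_bounds t S Hx; have hr := rb S k.
  have hs : 0 <= \big[Rplus/0]_(m | (m != a) && (m != b)) (if m \in S then Wt x t S else 0).
    by apply: sum_ge0 => m _; case: ifP => _; lra.
  have hp : 0 <= (if (a \in S) && (b \in S) then Wt x t S else 0) by case: ifP => _; lra.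
  rewrite /G.
  case: (boolP [exists m, [&& m \in S, m != a & m != b]]).
    case/existsP => m /and3P [mS ma mb].
    have : Wt x t S <= \big[Rplus/0]_(m | (m != a) && (m != b)) (if m \in S then Wt x t S else 0).
      rewrite (bigD1 m) /=; last by rewrite ma mb.
      rewrite mS; apply: Rle_addr.
      by apply: sum_ge0 => i _; case: ifP => _; lra.
    nra.
  move/existsPn => H; move: hs.
  set s := \big[Rplus/0]_(m | (m != a) && (m != b)) _ => hs.
  have Hm : forall m, m \in S -> (m == a) || (m == b).
    by move=> m mS; have := H m; rewrite mS /= negb_and !negbK.
  case aS: (a \in S); case bS: (b \in S) => /=.
  - nra.
  - have eS : S = [set a].
      apply/setP => m; rewrite in_set1; case: (eqVneq m a) => [->|ma]; first by rewrite aS.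
      apply/negP => mS; have := Hm m mS; rewrite (negbTE ma) /= => /eqP mb.
      by rewrite mb bS in mS.
    have -> : r S k = r [set a] k by rewrite eS.
    have : Wt x t S * r [set a] k <= Wt x t S * A by apply: Rmult_le_compat_l; lra.
    lra.
  - have eS : S = [set b].
      apply/setP => m; rewrite in_set1; case: (eqVneq m b) => [->|mb]; first by rewrite bS.
      apply/negP => mS; have := Hm m mS; rewrite (negbTE mb) orbF => /eqP ma.
      by rewrite ma aS in mS.
    have -> : r S k = r [set b] k by rewrite eS.
    have : Wt x t S * r [set b] k <= Wt x t S * 0 by apply: Rmult_le_compat_l; lra.
    nra.
  - case/set0Pn: S0 => m mS; have := Hm m mS; case/orP => /eqP e.
      by rewrite e aS in mS.
    by rewrite e bS in mS.
have s1 : Et r x t k <= \big[Rplus/0]_(S : {set 'I_N} | S != set0) (A * Wt x t S + G S).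
  by apply: sum_le.
rewrite big_split /= -big_distrr /= Qt_sum in s1.
have s2 : \big[Rplus/0]_(S : {set 'I_N} | S != set0) G S <= \big[Rplus/0]_(S : {set 'I_N}) G S.
  apply: sum_sub => S; rewrite /G.
  have : 0 <= \big[Rplus/0]_(m | (m != a) && (m != b)) (if m \in S then Wt x t S else 0).
    by apply: sum_ge0 => m _; case: ifP => _; have := Wt_bounds t S Hx; lra.
  case: ifP => _; have := Wt_bounds t S Hx; lra.
have s3 : \big[Rplus/0]_(S : {set 'I_N}) G S =
   \big[Rplus/0]_(m | (m != a) && (m != b)) x m t + x a t * x b t.
  rewrite /G big_split /= marg2 //; congr (_ + _).
  rewrite exchange_big /=; apply: eq_bigr => m _; exact: marg1.
apply: Rle_trans s1 _; apply: Rplus_le_compat_l; rewrite -s3; exact: s2.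
Qed.

Lemma E_lower {N} (r : game N) (x : profile N) t k (i : 'I_N) A :
  game_bounded r -> is_profile x -> 0 <= A -> A <= r [set i] k ->
  A * Qt x t + - ((A + 1) * \big[Rplus/0]_(m | m != i) x m t) <= Et r x t k.
Proof.
move=> rb Hx HA ri.
pose G := fun S : {set 'I_N} =>
  \big[Rplus/0]_(m | m != i) (if m \in S then Wt x t S else 0).
have HG : forall S, 0 <= G S.
  by move=> S; apply: sum_ge0 => m _; case: ifP => _; have := Wt_bounds t S Hx; lra.
have key : forall S : {set 'I_N}, S != set0 ->
    A * Wt x t S + (- (A + 1)) * G S <= Wt x t S * r S k.
  move=> S S0; have hw := Wt_bounds t S Hx; have hr := rb S k; have hg := HG S.
  case: (boolP [exists m, (m \in S) && (m != i)]).
    case/existsP => m /andP [mS mi].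
    have : Wt x t S <= G S.
      rewrite /G (bigD1 m) //= mS; apply: Rle_addr.
      by apply: sum_ge0 => j _; case: ifP => _; lra.
    nra.
  move/existsPn => H.
  have eS : S = [set i].
    apply/setP => m; rewrite in_set1; case: (eqVneq m i) => [->|mi].
      case/set0Pn: S0 => m' mS'; have := H m'; rewrite mS' /= negbK => /eqP <-; exact: mS'.
    by apply/negP => mS; have := H m; rewrite mS mi.
  have -> : r S k = r [set i] k by rewrite eS.
  have : Wt x t S * A <= Wt x t S * r [set i] k by apply: Rmult_le_compat_l; lra.
  nra.
have s1 : \big[Rplus/0]_(S : {set 'I_N} | S != set0) (A * Wt x t S + (- (A + 1)) * G S)
          <= Et r x t k by apply: sum_le.
rewrite big_split /= -!big_distrr /= Qt_sum in s1.
have s2 : \big[Rplus/0]_(S : {set 'I_N} | S != set0) G S <= \big[Rplus/0]_(S : {set 'I_N}) G S.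
  by apply: sum_sub.
have s3 : \big[Rplus/0]_(S : {set 'I_N}) G S = \big[Rplus/0]_(m | m != i) x m t.
  rewrite /G exchange_big /=; apply: eq_bigr => m _; exact: marg1.
apply: Rle_trans s1; apply: Rplus_le_compat_l; rewrite -s3.
rewrite Ropp_mult_distr_l; apply: Rmult_le_compat_neg_l; first lra.
exact: s2.
Qed.

Definition xp {N} (i j : 'I_N) (d : R) : profile N :=
  fun m t => if m == i then d else if m == j then d * d else 0.

Theorem lemma1 (N : nat) (r : game N) :
  game_bounded r ->
  (forall i : 'I_N, r [set i] i = 0%R) ->
  (exists i : 'I_N, normal r i /\ forall j : 'I_N, (0 <= r [set i] j)%R) ->
  forall eps : R, (eps > 0)%R ->
    exists x : profile N, is_profile x /\ is_stationary x /\ eps_equilibrium r x eps.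
Proof.
move=> rb rii [i [Hn Hi]] eps He.
have [_ [j [ji [_ rji]]]] := Hn 1%nat.
have ij : i != j by apply/eqP => e; apply: ji; rewrite e.
set d := Rmin (1/2) (eps/4).
have hd0 : 0 < d by apply: Rmin_glb_lt; lra.
have hd1 : d <= 1/2 by apply: Rmin_l.
have hd2 : d <= eps/4 by apply: Rmin_r.
set x := xp i j d.
have Hx : is_profile x.
  move=> m t; rewrite /x /xp; case: ifP => _; [lra | case: ifP => _; nra].
exists x; split; first exact: Hx; split; first by move=> m t.
move=> k y Hy.
set z := deviate x k y.
have Hz : is_profile z.
  by move=> m t; rewrite /z /deviate; case: ifP => _; [apply: Hy | apply: Hx].
have xi : forall t, x i t = d by move=> t; rewrite /x /xp eqxx.
have xj : forall t, x j t = d * d by move=> t; rewrite /x /xp eqxx eq_sym (negbTE ij).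
have xo : forall m t, m != i -> x m t <= (if m == j then d * d else 0).
  move=> m t mi; rewrite /x /xp (negbTE mi); case: ifP => _; lra.
have Qx : forall t, d <= Qt x t by move=> t; rewrite -(xi t); apply: Qt_ge.
have lowx : forall k, r [set i] k - 2 * d <= gamma r x k.
  move=> k'.
  have hA : 0 <= r [set i] k' <= 1 by split; [apply: Hi | have := rb [set i] k'; lra].
  set A := r [set i] k' in hA *.
  apply: (lim_lower (gamma_spec k' rb Hx) (q := 1 - d) (C := 2)); try lra.
  move=> T.
  have hE : forall t, A * Qt x t - (A + 1) * (d * d) <= Et r x t k'.
    move=> t; have h1 := @E_lower _ r x t k' i A rb Hx (proj1 hA) (Rle_refl A).
    have h2 : \big[Rplus/0]_(m | m != i) x m t <= d * d.
      apply: sum_one; first nra.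
      by move=> m mi; apply: xo.
    have : (A + 1) * \big[Rplus/0]_(m | m != i) x m t <= (A + 1) * (d * d).
      by apply: Rmult_le_compat_l; lra.
    lra.
  have h1 := payoff_lower Hx hE T.
  have h2 := sum_pc (c := fun _ => (A + 1) * (d * d)) (al := (A + 1) * (d * d)) (be := 0) Hx
    ltac:(move=> t /=; lra) T.
  have h3 := sum_p Hx Qx T.
  have h4 := p_decay (d := d) Hx ltac:(lra) Qx T.
  have h5 := noquit_bounds T Hx.
  have h6 := rb set0 k'.
  move: h1 h2 h3 h4 h5 h6.
  set s := \big[Rplus/0]_(t < T) noquit x t.
  set sc := \big[Rplus/0]_(t < T) (noquit x t * _).
  set p := noquit x T => h1 h2 h3 h4 h5 h6.
  have hs : 0 <= s by apply: sum_ge0 => t _; have := noquit_bounds t Hx; lra.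
  have h7 : (A + 1) * d * (d * s) <= (A + 1) * d * 1.
    by apply: Rmult_le_compat_l; nra.
  have h8 : p * r set0 k' >= - p by nra.
  have h9 : A * p <= p by nra.
  nra.
case: (eqVneq k i) => [ki|ki].
-
  subst k.
  have zi : forall t, z i t = y t by move=> t; rewrite /z /deviate eqxx.
  have zj : forall t, z j t = d * d by move=> t; rewrite /z /deviate eq_sym (negbTE ij).
  have Qz : forall t, d * d <= Qt z t by move=> t; rewrite -(zj t); apply: Qt_ge.
  have hE : forall t, Et r z t i <= 0 * Qt z t + d * d * Qt z t.
    move=> t; have h1 := @E_upper _ r z t i j i 0 rb Hz
      ltac:(by rewrite eq_sym) (Rle_refl 0) rji ltac:(rewrite rii; lra).
    have h2 : \big[Rplus/0]_(m | (m != j) && (m != i)) z m t <= 0.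
      apply: (@sum_one _ j 0); first lra.
      move=> m /andP [mj mi].
      rewrite /z /deviate /x /xp (negbTE mi) (negbTE mj); lra.
    have h3 : z j t * z i t <= d * d * Qt z t.
      rewrite zj; apply: Rmult_le_compat_l; first nra.
      exact: Qt_ge.
    lra.
  have upz : gamma r z i <= d * d.
    apply: (lim_upper (gamma_spec i rb Hz) (q := 1 - d * d) (C := 1)); try nra.
    move=> T.
    have h1 := payoff_upper Hz (Rle_refl 0) hE T.
    have h2 := sum_pc (c := fun t => d * d * Qt z t) (al := 0) (be := d * d) Hz
      ltac:(move=> t /=; lra) T.
    have h4 := p_decay (d := d * d) Hz ltac:(nra) Qz T.
    have h5 := noquit_bounds T Hz.
    have h6 := rb set0 i.
    move: h1 h2 h4 h5 h6.
    set s := \big[Rplus/0]_(t < T) noquit z t.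
    set sc := \big[Rplus/0]_(t < T) (noquit z t * _).
    set p := noquit z T => h1 h2 h4 h5 h6.
    have h8 : p * r set0 i <= p by nra.
    nra.
  have := lowx i; rewrite rii.
  have hdd : d * d <= d / 2 by nra.
  lra.
-
  have ik : i != k by rewrite eq_sym.
  have zi : forall t, z i t = d by move=> t; rewrite /z /deviate (negbTE ik) xi.
  have zk : forall t, z k t = y t by move=> t; rewrite /z /deviate eqxx.
  have Qz : forall t, d <= Qt z t by move=> t; rewrite -(zi t); apply: Qt_ge.
  have hA : 0 <= r [set i] k <= 1 by split; [apply: Hi | have := rb [set i] k; lra].
  set A := r [set i] k in hA *.
  have hE : forall t, Et r z t k <= A * Qt z t + (d * d + d * Qt z t).
    move=> t; have h1 := @E_upper _ r z t k i k A rb Hz ik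
      (proj1 hA) (Rle_refl A) ltac:(rewrite rii; lra).
    have h2 : \big[Rplus/0]_(m | (m != i) && (m != k)) z m t <= d * d.
      apply: (@sum_one _ j (d * d)); first nra.
      move=> m /andP [mi mk].
      rewrite /z /deviate (negbTE mk); exact: xo.
    have h3 : z i t * z k t <= d * Qt z t.
      rewrite zi; apply: Rmult_le_compat_l; first lra.
      exact: Qt_ge.
    lra.
  have upz : gamma r z k <= A + 2 * d.
    apply: (lim_upper (gamma_spec k rb Hz) (q := 1 - d) (C := 1)); try lra.
    move=> T.
    have h1 := payoff_upper Hz (proj1 hA) hE T.
    have h2 := sum_pc (c := fun t => d * d + d * Qt z t) (al := d * d) (be := d) Hz
      ltac:(move=> t /=; lra) T.
    have h3 := sum_p Hz Qz T.
    have h4 := p_decay (d := d) Hz ltac:(lra) Qz T.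
    have h5 := noquit_bounds T Hz.
    have h6 := rb set0 k.
    move: h1 h2 h3 h4 h5 h6.
    set s := \big[Rplus/0]_(t < T) noquit z t.
    set sc := \big[Rplus/0]_(t < T) (noquit z t * _).
    set p := noquit z T => h1 h2 h3 h4 h5 h6.
    have h7 : d * (d * s) <= d * 1 by apply: Rmult_le_compat_l; lra.
    have h8 : p * r set0 k <= p by nra.
    have h9 : 0 <= A * p by nra.
    nra.
  have := lowx k; rewrite -/A; lra.
Qed.
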